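(* Let $A\in\mathbb{R}^{2\times 2}$ and $C\in\mathbb{R}^{1\times 2}$, with $(A,C)$ an observable pair and all eigenvalues of $A$ nonzero. (i) If there is no positive integer $h$ such that $A$ has two distinct eigenvalues $\lambda_1\neq\lambda_2$ with $\lambda_1^h=\lambda_2^h$, then for any two distinct nonnegative integers $t_1,t_2$ the matrix with rows $CA^{t_1},CA^{t_2}$ has rank $2$. (ii) If $A$ has two distinct eigenvalues $\lambda_1\neq\lambda_2$ with $\lambda_1^h=\lambda_2^h$ for some positive integer $h$, let $\bar h$ be the smallest such positive integer. Then for any $t\in\{0,1,2,\ldots\}$, any positive integer $T$, and any set of $N_s$ distinct integers $t_1,\ldots,t_{N_s}$ in $[t,t+T-1]$ with $N_s\geq 1+T/\bar h$, the matrix with rows $CA^{t_1},\ldots,CA^{t_{N_s}}$ has rank $2$.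
   Context: Setting: discrete-time single-output system $x(t+1)=Ax(t)+Bu(t)$, $y(t)=Cx(t)+Du(t)$ with output measured at selected time instances; the matrix with rows $CA^{t_i}$ is the sample-based observability matrix and rank $n$ means sample-based observability. $(A,C)$ observable means the matrix with rows $C,CA$ has rank $2$. *)

(* Defs.v *)
From HB Require Import structures.
From mathcomp Require Import all_boot all_order all_algebra.
From mathcomp Require Import reals.
From mathcomp Require Import complex.
Set Implicit Arguments. Unset Strict Implicit. Unset Printing Implicit Defensive.
Import Order.TTheory GRing.Theory Num.Theory.
Local Open Scope ring_scope.

Definition cplx_mx (R : realType) (A : 'M[R]_2) : 'M[R[i]]_2 :=
  map_mx (fun x => (x%:C)%C) A.

Definition eigval (R : realType) (A : 'M[R]_2) (lam : R[i]) : Prop :=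
  eigenvalue (cplx_mx A) lam.

Definition observable (R : realType) (A : 'M[R]_2) (C : 'rV[R]_2) : Prop :=
  \rank (col_mx C (C *m A)) = 2%N.

Definition sample_obs_mx (R : realType) (A : 'M[R]_2) (C : 'rV[R]_2)
  (Ns : nat) (ts : 'I_Ns -> nat) : 'M[R]_(Ns, 2) :=
  \matrix_(i < Ns, j < 2) (C *m A ^+ ts i) 0 j.

Definition has_eig_collision (R : realType) (A : 'M[R]_2) (h : nat) : Prop :=
  exists l1 l2 : R[i], [/\ eigval A l1, eigval A l2, l1 <> l2 & l1 ^+ h = l2 ^+ h].

(* Main.v *)
Require Import Defs.
From HB Require Import structures.
From mathcomp Require Import all_boot all_order all_algebra.
From mathcomp Require Import reals complex ring lra zify.
Import Order.TTheory GRing.Theory Num.Theory.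
Local Open Scope ring_scope.

Lemma det2 (R : comNzRingType) (M : 'M[R]_2) : \det M = M 0 0 * M 1 1 - M 0 1 * M 1 0.
Proof.
rewrite (expand_det_row _ 0) !big_ord_recl big_ord0 /cofactor !det_mx11 /=.
rewrite !mxE /=.
have L1 : lift (0:'I_2) (0:'I_1) = 1 by apply/val_inj.
have L2 : lift (1:'I_2) (0:'I_1) = 0 by apply/val_inj.
rewrite /bump /= addr0 -/(0 : 'I_2) -/(0 : 'I_1) ?L1.
have L3 : lift (0:'I_2) (0:'I_1) = 1 by apply/val_inj.
have E0 : (ord0 : 'I_2) = 0 by apply/val_inj.
rewrite E0 L2 /= expr0 expr1. ring.
Qed.

Lemma tr2 (R : comNzRingType) (M : 'M[R]_2) : \tr M = M 0 0 + M 1 1.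
Proof. rewrite /mxtrace !big_ord_recl big_ord0 addr0; congr (M _ _ + M _ _); exact/val_inj. Qed.

Lemma char2 (F : fieldType) (M : 'M[F]_2) (x : F) :
  (char_poly M).[x] = x ^+ 2 - (M 0 0 + M 1 1) * x + (M 0 0 * M 1 1 - M 0 1 * M 1 0).
Proof.
rewrite horner_coef size_char_poly !big_ord_recl big_ord0 /=.
have h2 : (char_poly M)`_2 = 1.
  by have := monicP (char_poly_monic M); rewrite /lead_coef size_char_poly.
have h1 := char_poly_trace M; rewrite /= in h1.
have h0 := char_poly_det M.
rewrite /bump /=.
rewrite !addn0 !add1n h0 (h1 isT) h2 tr2 det2 expr0 expr1 -signr_odd /= expr0 mul1r. ring.
Qed.

Lemma L_eig (R : realType) (A : 'M[R]_2) (l : R[i]) :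
  l ^+ 2 - ((A 0 0 + A 1 1)%:C)%C * l + ((A 0 0 * A 1 1 - A 0 1 * A 1 0)%:C)%C = 0 ->
  eigval A l.
Proof.
move=> h; rewrite /eigval eigenvalue_root_char /root char2 /cplx_mx !mxE.
by rewrite -!rmorphM -!rmorphD -!rmorphB h.
Qed.

Lemma L_unit (R : realType) (A : 'M[R]_2) :
  (forall lam : R[i], eigval A lam -> lam != 0) -> A \in unitmx.
Proof.
move=> h; rewrite unitmxE unitfE det2; apply/negP => /eqP h0.
have e : eigval A 0.
  by apply: L_eig; rewrite h0 expr2 !mulr0 subr0 add0r.
by move: (h _ e); rewrite eqxx.
Qed.

Lemma L_pow (R : realType) (A : 'M[R]_2) (l : R[i]) (d : nat) (c : R) :
  eigval A l -> A ^+ d = c%:M -> l ^+ d = (c%:C)%C.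
Proof.
move=> /eigenvalueP [v hv v0] hA.
have hk k : v *m (cplx_mx A) ^+ k = l ^+ k *: v.
  elim: k => [|k IH]; first by rewrite !expr0 scale1r mulmx1.
  by rewrite exprSr -mulmxE mulmxA IH -scalemxAl hv scalerA -exprSr.
have hM : (cplx_mx A) ^+ d = (c%:C)%C%:M.
  by rewrite /cplx_mx -rmorphXn hA /= map_scalar_mx.
have := hk d; rewrite hM mul_mx_scalar => /eqP.
rewrite eq_sym -subr_eq0 -scalerBl scaler_eq0 (negbTE v0) orbF subr_eq0.
by move/eqP.
Qed.

Lemma C_neq0 (R : realType) (A : 'M[R]_2) (C : 'rV[R]_2) : observable A C -> C != 0.
Proof.
rewrite /observable; apply: contraPneq => ->.
by rewrite mul0mx rank_col_mx0 mxrank0.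
Qed.

Lemma obs_unit (R : realType) (A : 'M[R]_2) (C : 'rV[R]_2) :
  observable A C -> col_mx C (C *m A) \in unitmx.
Proof. by rewrite /observable -row_free_unit /row_free => ->. Qed.

Lemma rank_colC (R : realType) (C X : 'rV[R]_2) :
  C != 0 -> \rank (col_mx C X) != 2%N -> (X <= C)%MS.
Proof.
move=> C0 hr; apply/negPn/negP => nX.
have hr' : \rank (col_mx C X) = \rank (C + X)%MS by rewrite addsmxE.
have := mxrank_leqif_sup (addsmxSl C X).
move/ltn_leqif; rewrite addsmx_sub submx_refl (negbTE nX) /= rank_rV C0 /= => h.
move: hr; rewrite hr' eqn_leq rank_leq_col /= h //.
Qed.

Lemma M1 (R : realType) (A : 'M[R]_2) (C : 'rV[R]_2) (t1 d : nat) :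
  observable A C -> A \in unitmx ->
  \rank (col_mx (C *m A ^+ t1) (C *m A ^+ (t1 + d))) != 2%N ->
  exists c : R, A ^+ d = c%:M.
Proof.
move=> hO hU hr.
have e : col_mx (C *m A ^+ t1) (C *m A ^+ (t1 + d)) = col_mx C (C *m A ^+ d) *m A ^+ t1.
  by rewrite mul_col_mx -mulmxA mulmxE -exprD addnC.
have hU' : A ^+ t1 \in unitmx by rewrite -[_ \in unitmx]/(_ \is a GRing.unit) unitrX.
move: hr; rewrite e mxrankMfree ?row_free_unit // => hr.
have /submxP [D hD] := rank_colC _ _ _ (C_neq0 _ _ _ hO) hr.
set k := D 0 0.
have hX : C *m A ^+ d = k *: C by rewrite hD {1}(mx11_scalar D) mul_scalar_mx.
exists k.
have h0 : col_mx C (C *m A) *m (A ^+ d - k%:M) = 0.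
  rewrite mul_col_mx !mulmxBr mul_mx_scalar hX subrr.
  have cA : A *m A ^+ d = A ^+ d *m A by rewrite mulmxE -exprS -exprSr.
  rewrite mul_mx_scalar -!mulmxA cA mulmxA hX -scalemxAl subrr.
  by apply/matrixP => i j; rewrite !mxE; case: splitP => ? _; rewrite mxE.
have := congr1 (mulmx (invmx (col_mx C (C *m A)))) h0.
rewrite mulKmx ?(obs_unit _ _ _ hO) // mulmx0 => /eqP; rewrite subr_eq0 => /eqP //.
Qed.

Lemma mul2E (R : comNzRingType) (M N : 'M[R]_2) i j :
  (M *m N) i j = M i 0 * N 0 j + M i 1 * N 1 j.
Proof.
rewrite mxE !big_ord_recl big_ord0 addr0; congr (M i _ * N _ j + M i _ * N _ j); exact/val_inj.
Qed.

Lemma ord2P (P : 'I_2 -> Prop) : P 0 -> P 1 -> forall i, P i.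
Proof.
move=> h0 h1 [[|[|k]] hk].
- by have -> : Ordinal hk = 0 by apply/val_inj.
- by have -> : Ordinal hk = 1 by apply/val_inj.
- by [].
Qed.

Lemma sqr0_N (R : realType) (A : 'M[R]_2) :
  (A 0 0 + A 1 1) ^+ 2 - 4 * (A 0 0 * A 1 1 - A 0 1 * A 1 0) = 0 ->
  (A - ((A 0 0 + A 1 1) / 2)%:M) *m (A - ((A 0 0 + A 1 1) / 2)%:M) = 0.
Proof.
move=> hD; apply/matrixP; apply: ord2P; apply: ord2P; rewrite mul2E !mxE /= ?mulr0n ?mulr1n ?subr0.
- by rewrite -[RHS](mulr0 (4^-1)) -hD; field.
- by field.
- by field.
- by rewrite -[RHS](mulr0 (4^-1)) -hD; field.
Qed.

Lemma binN (R : realType) (A N : 'M[R]_2) (l : R) :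
  A = l%:M + N -> N *m N = 0 ->
  forall n, A ^+ n.+1 = (l ^+ n.+1)%:M + (n.+1%:R * l ^+ n) *: N.
Proof.
move=> hA hN; elim => [|n IH].
  by rewrite !expr1 expr0 mulr1 scale1r.
rewrite exprS IH {1}hA mulrDl !mulrDr -!mulmxE -scalar_mxM mul_scalar_mx mul_mx_scalar.
rewrite -scalemxAr hN scaler0 addr0 !scalerA -addrA -scalerDl -exprS.
congr (_ + _ *: _); rewrite exprS -[n.+2]addn1 natrD; ring.
Qed.

Lemma L_coll (R : realType) (A : 'M[R]_2) (C : 'rV[R]_2) (d : nat) (c : R) :
  observable A C -> A \in unitmx -> (0 < d)%N -> A ^+ d = c%:M -> has_eig_collision A d.
Proof.
move=> hO hU hd hA.
have [D0|Dn0] := eqVneq ((A 0 0 + A 1 1) ^+ 2 - 4 * (A 0 0 * A 1 1 - A 0 1 * A 1 0)) 0.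
  exfalso.
  have hN := sqr0_N _ A D0.
  set l := (A 0 0 + A 1 1) / 2 in hN.
  set N := A - l%:M in hN.
  have hAN : A = l%:M + N by rewrite /N addrC subrK.
  case: d hd hA => // n _ hA.
  have := binN _ _ _ _ hAN hN n; rewrite hA => hE.
  have l0 : l != 0.
    apply/negP => /eqP l0; move: hU; rewrite unitmxE unitfE det2.
    have t0 : A 0 0 + A 1 1 = 0.
      by move: l0; rewrite /l => /eqP; rewrite mulf_eq0 invr_eq0 pnatr_eq0 orbF => /eqP.
    by move: D0; rewrite t0 expr2 mul0r sub0r => /eqP; rewrite oppr_eq0 mulf_eq0 pnatr_eq0 /= => /eqP ->; rewrite eqxx.
  set k := n.+1%:R * l ^+ n in hE.
  have k0 : k != 0 by apply: mulf_neq0; rewrite ?pnatr_eq0 ?expf_neq0.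
  have hNm : N = (k^-1 * (c - l ^+ n.+1))%:M.
    have hk : k *: N = (c - l ^+ n.+1)%:M.
      have e : (c - l ^+ n.+1)%:M = c%:M - (l ^+ n.+1)%:M :> 'M[R]_2 := raddfB (@scalar_mx R 2) c _.
      by rewrite e hE [_ + k *: N]addrC addrK.
    by rewrite -scale_scalar_mx -hk scalerA mulVf // scale1r.
  move: hN; rewrite hNm -scalar_mxM => /matrixP /(_ 0 0); rewrite !mxE /= mulr1n.
  move=> /eqP; rewrite mulf_eq0 orbb => /eqP m0.
  move: hNm; rewrite m0 => N0.
  have AE : A = l%:M by rewrite hAN N0 (raddf0 (@scalar_mx R 2)) addr0.
  move: hO; rewrite /observable AE mul_mx_scalar => hr.
  have := mxrankS (_ : (col_mx C (l *: C) <= C)%MS).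
  rewrite col_mx_sub submx_refl scalemx_sub //= hr => /(_ isT).
  by move/leq_trans => /(_ _ (rank_leq_row C)).
set s := sqrtC (((A 0 0 + A 1 1) ^+ 2 - 4 * (A 0 0 * A 1 1 - A 0 1 * A 1 0))%:C)%C.
have hs : s ^+ 2 = ((A 0 0 + A 1 1)%:C ^+ 2 - 4 * (A 0 0 * A 1 1 - A 0 1 * A 1 0)%:C)%C.
  by rewrite sqrtCK rmorphB rmorphXn rmorphM rmorph_nat.
have s0 : s != 0.
  apply: contraNneq Dn0 => s0.
  have h2 := sqrtCK (((A 0 0 + A 1 1) ^+ 2 - 4 * (A 0 0 * A 1 1 - A 0 1 * A 1 0))%:C)%C.
  rewrite -/s s0 expr2 mul0r in h2.
  by apply/eqP; apply: (@complexI R); exact: esym h2.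
have hroot l : l ^+ 2 - (A 0 0 + A 1 1)%:C%C * l + (A 0 0 * A 1 1 - A 0 1 * A 1 0)%:C%C
   = (l - ((A 0 0 + A 1 1)%:C%C + s) / 2) * (l - ((A 0 0 + A 1 1)%:C%C - s) / 2).
  set t := (A 0 0 + A 1 1)%:C%C; set q := (A 0 0 * A 1 1 - A 0 1 * A 1 0)%:C%C.
  have -> : q = (t ^+ 2 - s ^+ 2) / 4 by rewrite hs; field.
  by field.
exists (((A 0 0 + A 1 1)%:C%C + s) / 2), (((A 0 0 + A 1 1)%:C%C - s) / 2).
have e1 : eigval A (((A 0 0 + A 1 1)%:C%C + s) / 2) by apply: L_eig; rewrite hroot subrr mul0r.
have e2 : eigval A (((A 0 0 + A 1 1)%:C%C - s) / 2) by apply: L_eig; rewrite hroot subrr mulr0.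
split => //.
  move=> /(congr1 (fun x => x * 2)); rewrite !mulfVK ?pnatr_eq0 // => /addrI /eqP.
  by rewrite -subr_eq0 opprK -mulr2n mulrn_eq0 (negbTE s0).
by rewrite (L_pow _ _ _ _ _ e1 hA) (L_pow _ _ _ _ _ e2 hA).
Qed.
Lemma rk_sym (R : realType) (X Y : 'rV[R]_2) : \rank (col_mx X Y) = \rank (col_mx Y X).
Proof. by rewrite -!addsmxE addsmxC. Qed.
Lemma rowS (R : realType) (A : 'M[R]_2) (C : 'rV[R]_2) Ns (ts : 'I_Ns -> nat) i :
  row i (sample_obs_mx A C ts) = C *m A ^+ ts i.
Proof. by apply/rowP => j; rewrite !mxE. Qed.
Lemma comb (hbar t T Ns : nat) (ts : 'I_Ns -> nat) : (0 < hbar)%N -> (0 < T)%N -> injective ts ->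
  (forall i, t <= ts i < t + T)%N ->
  (forall i j, ts i < ts j -> hbar <= ts j - ts i)%N -> (Ns * hbar < hbar + T)%N.
Proof.
move=> hb T0 inj hr hd.
have fP i : ((ts i - t) %/ hbar < (T.-1 %/ hbar).+1)%N.
  rewrite ltnS leq_div2r //; have := hr i; lia.
pose f i := Ordinal (fP i).
have key x : ((x + hbar) %/ hbar = x %/ hbar + 1)%N by rewrite divnDr ?dvdnn // divnn hb.
have mono i j : (ts i < ts j)%N -> ((ts i - t) %/ hbar < (ts j - t) %/ hbar)%N.
  move=> lt; have := hd _ _ lt; have := hr i; have := hr j => h1 h2 h3.
  have : ((ts i - t + hbar) %/ hbar <= (ts j - t) %/ hbar)%N by apply: leq_div2r; lia.
  rewrite key; lia.
have finj : injective f.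
  move=> i j /(congr1 val) /= e; apply: inj.
  case: (ltngtP (ts i) (ts j)) => // lt.
  - by have := mono _ _ lt; rewrite e ltnn.
  - by have := mono _ _ lt; rewrite e ltnn.
have := leq_card f finj; rewrite !card_ord => hN.
have h1 : (Ns * hbar <= (T.-1 %/ hbar).+1 * hbar)%N by rewrite leq_mul2r hN orbT.
have h2 := leq_trunc_div T.-1 hbar.
rewrite mulSn in h1. lia.
Qed.

Theorem lemma3 (R : realType) (A : 'M[R]_2) (C : 'rV[R]_2) :
  observable A C ->
  (forall lam : R[i], eigval A lam -> lam != 0) ->
  ((~ (exists h : nat, (0 < h)%N /\ has_eig_collision A h)) ->
     forall t1 t2 : nat, t1 <> t2 ->
       \rank (col_mx (C *m A ^+ t1) (C *m A ^+ t2)) = 2%N)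
  /\
  (forall hbar : nat,
     (0 < hbar)%N -> has_eig_collision A hbar ->
     (forall h : nat, (0 < h)%N -> (h < hbar)%N -> ~ has_eig_collision A h) ->
     forall (t T Ns : nat) (ts : 'I_Ns -> nat),
       (0 < T)%N ->
       injective ts ->
       (forall i, t <= ts i < t + T)%N ->
       (hbar + T <= Ns * hbar)%N ->
       \rank (sample_obs_mx A C ts) = 2%N).
Proof.
move=> hO hE; have hU := L_unit _ _ hE.
have key t1 d : (0 < d)%N -> \rank (col_mx (C *m A ^+ t1) (C *m A ^+ (t1 + d))) != 2%N ->
    has_eig_collision A d.
  move=> hd hr; have [c hc] := M1 _ _ _ t1 d hO hU hr.
  exact: (L_coll _ _ _ _ _ hO hU hd hc).
split.
  move=> hno t1 t2 ne; apply/eqP/negPn/negP => hr.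
  wlog lt : t1 t2 ne hr / (t1 < t2)%N.
    move=> W; case: (ltngtP t1 t2) => h; first exact: (W t1 t2).
    - by apply: (W t2 t1) => //; [move=> e; apply: ne | rewrite rk_sym].
    - by [].
  apply: hno; exists (t2 - t1)%N; split; first by rewrite subn_gt0.
  apply: (key t1); first by rewrite subn_gt0.
  by rewrite subnKC // ltnW.
move=> hbar hb0 _ hmin t T Ns ts T0 inj hr hN.
apply/eqP/negPn/negP => hrk.
suff : (Ns * hbar < hbar + T)%N by rewrite ltnNge hN.
apply: (comb hbar t T Ns ts) => // i j lt.
rewrite leqNgt; apply/negP => lt2.
apply: (hmin (ts j - ts i)%N); [by rewrite subn_gt0 | exact: lt2 | ].
apply: (key (ts i)); first by rewrite subn_gt0.
rewrite subnKC; last exact: ltnW.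
rewrite -(rowS _ A C Ns ts i) -(rowS _ A C Ns ts j); apply/negP => /eqP h2.
have : (\rank (col_mx (row i (sample_obs_mx A C ts)) (row j (sample_obs_mx A C ts)))
         <= \rank (sample_obs_mx A C ts))%N.
  by apply: mxrankS; rewrite col_mx_sub !row_sub.
rewrite h2 => h2'.
by move: hrk; rewrite eqn_leq rank_leq_col h2'.
Qed.
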